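(* Let $A\in\mathbb{R}^{m\times n}$, $y\in\mathbb{R}^m$, $\lambda>0$, and let $x^\star$ be a global minimizer of $$\min_{x\in\mathbb{R}^n}\ \frac{1}{2\lambda}\|Ax-y\|^2+\|Lx\|_{1,2}.$$ Let $\beta^\star=-\frac{1}{\lambda}A^\top(Ax^\star-y)$, let $\widehat{L}=L-P_{T_z}LP_{T_x^\perp}$ be the effective lifting operator associated with $x^\star$, let $\widehat{u}_{\min}=\widehat{L}(\widehat{L}^\top\widehat{L})^{-1}\beta^\star$, and define the OGN certificate $u^\dagger\in\mathbb{R}^p$ blockwise by $u^\dagger_{J_t}=(\widehat{u}_{\min})_{J_t}$ if $x^\star_{G_t}=0$, and $u^\dagger_{J_t}=x^\star_{G_t}/\|x^\star_{G_t}\|$ if $x^\star_{G_t}\neq 0$. Then $L^\top u^\dagger=\beta^\star$. Moreover, for every $t\in\{1,\dots,N\}$, if $\|u^\dagger_{J_t}\|<1$ then $x^\star_{G_t}=0$.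
   Context: Let $n,N\in\mathbb{N}$ and let $G_1,\dots,G_N\subseteq\{1,\dots,n\}$ be nonempty groups, possibly overlapping, with $\bigcup_i G_i=\{1,\dots,n\}$, and weights $w_1,\dots,w_N>0$. For $x\in\mathbb{R}^n$ and $G\subseteq\{1,\dots,n\}$, $x_G\in\mathbb{R}^{|G|}$ is the subvector of entries indexed by $G$ (increasing order). Let $p=\sum_i|G_i|$ and partition $\{1,\dots,p\}$ into consecutive blocks $J_i=\{\sum_{j<i}|G_j|+1,\dots,\sum_{j\le i}|G_j|\}$, $i=1,\dots,N$. The lifting operator $L\in\mathbb{R}^{p\times n}$ is defined by $(Lx)_{J_i}=w_ix_{G_i}$. For $z\in\mathbb{R}^p$, $\|z\|_{1,2}=\sum_{i=1}^N\|z_{J_i}\|$ (Euclidean norms), so $\|Lx\|_{1,2}=\sum_i w_i\|x_{G_i}\|$. For a point $x\in\mathbb{R}^n$: $\mathcal{I}_x=\{t:\ x_{G_t}\neq 0\}$; $\mathcal{E}_x=\{1,\dots,n\}\setminus\bigcup_{t\notin\mathcal{I}_x}G_t$ and $T_x=\{x'\in\mathbb{R}^n:\mathrm{supp}(x')\subseteq\mathcal{E}_x\}$; $\mathcal{E}_z=\bigcup_{t\in\mathcal{I}_x}J_t$ and $T_z=\{z'\in\mathbb{R}^p:\mathrm{supp}(z')\subseteq\mathcal{E}_z\}$. $P_T$ denotes the orthogonal projection onto a coordinate subspace $T$ (which zeroes the coordinates outside the corresponding index set) and $T^\perp$ its orthogonal complement. The effective lifting operator associated with $x$ is $\widehat{L}=L-P_{T_z}LP_{T_x^\perp}$;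 here $\widehat{L}^\top\widehat{L}$ is invertible. *)

(* Defs.v *)
From HB Require Import structures.
From mathcomp Require Import all_boot all_order all_algebra.
From mathcomp Require Import reals.
Set Implicit Arguments. Unset Strict Implicit. Unset Printing Implicit Defensive.
Import Order.TTheory GRing.Theory Num.Theory.
Local Open Scope ring_scope.

Section GroupLasso.
Variables (R : realType) (n N : nat) (G : 'I_N -> {set 'I_n}) (w : 'I_N -> R).

Definition sqnorm m (v : 'cV[R]_m) : R := \sum_(i < m) v i 0 ^+ 2.
Definition enorm m (v : 'cV[R]_m) : R := Num.sqrt (sqnorm v).

Definition gnorm (x : 'cV[R]_n) (t : 'I_N) : R :=
  Num.sqrt (\sum_(j in G t) x j 0 ^+ 2).

Definition p : nat := \sum_(t < N) #|G t|.
Definition offset (t : 'I_N) : nat := \sum_(s < N | (s < t)%N) #|G s|.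
Definition J (t : 'I_N) : {set 'I_p} :=
  [set k : 'I_p | (offset t <= k < offset t + #|G t|)%N].

(* gsel t k j : row k lies in block J_t and j is the (k - offset t)-th element
   (0-based, increasing order) of G_t *)
Definition gsel (t : 'I_N) (k : 'I_p) (j : 'I_n) : bool :=
  (k \in J t) && (val j == nth 0%N [seq val i | i <- enum (G t)] (k - offset t)).

(* lifting operator: (Lx)_{J_t} = w_t x_{G_t} *)
Definition Lop : 'M[R]_(p, n) :=
  \matrix_(k, j) \sum_(t < N) (if gsel t k j then w t else 0).

Definition blknorm (z : 'cV[R]_p) (t : 'I_N) : R :=
  Num.sqrt (\sum_(k in J t) z k 0 ^+ 2).
Definition norm12 (z : 'cV[R]_p) : R := \sum_(t < N) blknorm z t.

Definition active (x : 'cV[R]_n) (t : 'I_N) : bool :=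
  [exists j in G t, x j 0 != 0].
Definition Iset (x : 'cV[R]_n) : {set 'I_N} := [set t | active x t].

Definition Ex (x : 'cV[R]_n) : {set 'I_n} :=
  ~: (\bigcup_(t | t \notin Iset x) G t).
Definition Ez (x : 'cV[R]_n) : {set 'I_p} :=
  \bigcup_(t | t \in Iset x) J t.

Definition coordproj m (E : {set 'I_m}) : 'M[R]_m :=
  diag_mx (\row_i (if i \in E then 1 else 0)).
Definition PTx (x : 'cV[R]_n) : 'M[R]_n := coordproj (Ex x).
Definition PTxperp (x : 'cV[R]_n) : 'M[R]_n := coordproj (~: Ex x).
Definition PTz (x : 'cV[R]_n) : 'M[R]_p := coordproj (Ez x).

Definition Lhat (x : 'cV[R]_n) : 'M[R]_(p, n) :=
  Lop - PTz x *m Lop *m PTxperp x.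

Definition umin (x : 'cV[R]_n) (beta : 'cV[R]_n) : 'cV[R]_p :=
  Lhat x *m invmx ((Lhat x)^T *m Lhat x) *m beta.

Definition udagger (x : 'cV[R]_n) (beta : 'cV[R]_n) : 'cV[R]_p :=
  \col_k \sum_(t < N | k \in J t)
     (if active x t then (\sum_(j < n | gsel t k j) x j 0) / gnorm x t
      else umin x beta k 0).

End GroupLasso.

(* Main.v *)
Require Import Defs.
From HB Require Import structures.
From mathcomp Require Import all_boot all_order all_algebra.
From mathcomp Require Import reals.
From mathcomp Require Import ring lra.
Set Implicit Arguments. Unset Strict Implicit. Unset Printing Implicit Defensive.
Import Order.TTheory GRing.Theory Num.Theory.
Local Open Scope ring_scope.

Section Comb.
Variables (n N : nat) (G : 'I_N -> {set 'I_n}).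
Hypothesis HGne : forall t, G t != set0.

Lemma offset_le (t : 'I_N) (Q : pred 'I_N) : Q t ->
  (forall s : 'I_N, (s < t)%N -> Q s) ->
  (offset G t + #|G t| <= \sum_(s < N | Q s) #|G s|)%N.
Proof.
move=> Qt Hlt.
rewrite (bigID (fun s : 'I_N => (s < t)%N)) /=; apply: leq_add.
  rewrite /offset; apply: eq_leq; apply: eq_bigl => s.
  by case: (ltnP s t) => h; rewrite ?andbT ?andbF ?Hlt.
by rewrite (bigD1 t) /= ?Qt ?ltnn //= leq_addr.
Qed.

Lemma offset_p t : (offset G t + #|G t| <= p G)%N.
Proof. exact: (@offset_le t (fun _ => true)). Qed.

Lemma cardG_gt0 t : (0 < #|G t|)%N.
Proof. by rewrite card_gt0 HGne. Qed.

Lemma pos_lt t (j : 'I_n) :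
  (offset G t + (index j (enum (G t))) %% #|G t| < p G)%N.
Proof.
apply: leq_trans (offset_p t); rewrite ltn_add2l ltn_mod; exact: cardG_gt0.
Qed.

Definition pos t j : 'I_(p G) := Ordinal (pos_lt t j).

Lemma index_lt t j : j \in G t -> (index j (enum (G t)) < #|G t|)%N.
Proof. by move=> jG; rewrite cardE index_mem mem_enum. Qed.

Lemma posE t j : j \in G t -> val (pos t j) = (offset G t + index j (enum (G t)))%N.
Proof. by move=> jG /=; rewrite modn_small ?index_lt. Qed.

Lemma pos_J t j : j \in G t -> pos t j \in J G t.
Proof. by move=> jG; rewrite inE posE // leq_addr /= ltn_add2l index_lt. Qed.

Lemma J_disj t t' (k : 'I_(p G)) : k \in J G t -> k \in J G t' -> t = t'.
Proof.
have key : forall a b : 'I_N, (a < b)%N -> k \in J G a -> k \in J G b -> False.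
  move=> a b ab; rewrite !inE => /andP[_ h1] /andP[h2 _].
  have := @offset_le a (fun s : 'I_N => (s < b)%N) ab (fun s sa => ltn_trans sa ab).
  move=> h3; have h4 : (offset G a + #|G a| <= offset G b)%N by [].
  have := leq_trans h4 h2; by rewrite leqNgt h1.
move=> h h'; case: (ltngtP t t') => c.
- by case: (key _ _ c h h').
- by case: (key _ _ c h' h).
- exact: val_inj.
Qed.

Lemma pos_eq t t' j j' : j \in G t -> j' \in G t' -> pos t j = pos t' j' ->
  t = t' /\ j = j'.
Proof.
move=> jG jG' e.
have tt : t = t' by apply: (J_disj (pos_J jG)); rewrite e; exact: pos_J.
subst t'; split=> //.
have := congr1 val e; rewrite !posE // => /eqP; rewrite eqn_add2l => /eqP ei.
by rewrite -(nth_index j (s:=enum (G t)) (x:=j)) ?mem_enum // ei nth_index ?mem_enum.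
Qed.

Lemma J_surj t k : k \in J G t -> exists2 j, j \in G t & k = pos t j.
Proof.
rewrite inE => /andP[h1 h2].
case/set0Pn: (HGne t) => j0 _.
have hi : (k - offset G t < size (enum (G t)))%N.
  by rewrite -cardE ltn_subLR.
have jG : nth j0 (enum (G t)) (k - offset G t) \in G t.
  by rewrite -mem_enum mem_nth.
exists (nth j0 (enum (G t)) (k - offset G t)) => //.
apply: val_inj; rewrite (posE jG).
by rewrite index_uniq ?enum_uniq // subnKC.
Qed.

Lemma gselE t k j : @gsel _ _ G t k j = (j \in G t) && (k == pos t j).
Proof.
apply/idP/idP.
- case/andP => kJ /eqP hj.
  case: (J_surj kJ) => j' jG' ek.
  have : val j = val j'.
    rewrite hj ek posE // addKn (nth_map j'); last by rewrite -cardE index_lt.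
    by rewrite nth_index ?mem_enum.
  by move/val_inj => ejj; rewrite ejj jG' ek eqxx.
- case/andP => jG /eqP ->; rewrite /gsel pos_J //.
  rewrite posE // addKn (nth_map j); last by rewrite -cardE index_lt.
  all: by rewrite ?nth_index ?mem_enum ?eqxx.
Qed.

Lemma imset_pos t : pos t @: G t = J G t.
Proof.
apply/setP => k; apply/imsetP/idP.
- by case=> j jG ->; exact: pos_J.
- by case/J_surj => j jG ->; exists j.
Qed.

Lemma pos_inj t : {in G t &, injective (pos t)}.
Proof. by move=> j j' jG jG' e; case: (pos_eq jG jG' e). Qed.

Lemma sum_J (R : nmodType) t (F : 'I_(p G) -> R) :
  \sum_(k in J G t) F k = \sum_(j in G t) F (pos t j).
Proof. by rewrite -imset_pos big_imset //; exact: pos_inj. Qed.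

End Comb.

Section Mat.
Variables (R : realType) (n N : nat) (G : 'I_N -> {set 'I_n}) (w : 'I_N -> R).
Hypothesis HGne : forall t, G t != set0.
Local Notation pos := (pos HGne).
Local Notation P := (p G).

Definition Mc (c : 'I_N -> 'I_n -> R) : 'M[R]_(P, n) :=
  \matrix_(k, j) \sum_(t < N) (if (j \in G t) && (k == pos t j) then c t j else 0).

Lemma M_pos c t j j' : j \in G t ->
  Mc c (pos t j) j' = if j' == j then c t j else 0.
Proof.
move=> jG; rewrite mxE; case: (eqVneq j' j) => [->|ne].
- rewrite (bigD1 t) //= jG eqxx big1 ?addr0 // => t' ne'.
  case: ifP => // /andP[jG' /eqP e].
  by case: (pos_eq jG jG' e) => et _; rewrite et eqxx in ne'.
- apply: big1 => t' _; case: ifP => // /andP[jG' /eqP e].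
  by case: (pos_eq jG jG' e) => _ ej; rewrite ej eqxx in ne.
Qed.

Lemma MT_mul c m (V : 'M[R]_(P, m)) j i :
  ((Mc c)^T *m V) j i = \sum_(t < N | j \in G t) c t j * V (pos t j) i.
Proof.
rewrite mxE.
under eq_bigr => k _ do rewrite !mxE big_distrl /=.
rewrite exchange_big /= [RHS]big_mkcond /=; apply: eq_bigr => t _.
case: ifP => jG /=.
- rewrite (bigD1 (pos t j)) //= eqxx big1 ?addr0 // => k nk.
  by rewrite (negbTE nk) mul0r.
- by apply: big1 => k _; rewrite mul0r.
Qed.

Lemma mulM c (x : 'cV[R]_n) t j : j \in G t ->
  (Mc c *m x) (pos t j) 0 = c t j * x j 0.
Proof.
move=> jG; rewrite mxE (bigD1 j) //= M_pos // eqxx big1 ?addr0 // => j' nj.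
by rewrite M_pos // (negbTE nj) mul0r.
Qed.

Lemma MtM c : (Mc c)^T *m Mc c = diag_mx (\row_j \sum_(t < N | j \in G t) c t j ^+ 2).
Proof.
apply/matrixP => j j'; rewrite MT_mul.
under eq_bigr => t jG do rewrite M_pos //.
rewrite !mxE.
case: (eqVneq j' j) => [e|ne]; first subst j'.
- rewrite ?eqxx ?mulr1n; apply: eq_bigr => t _; by rewrite ?eqxx expr2.
- rewrite mulr0n; apply: big1 => t _; by rewrite mulr0.
Qed.

Lemma LopE : Lop G w = Mc (fun t _ => w t).
Proof. by apply/matrixP => k j; rewrite !mxE; apply: eq_bigr => t _; rewrite gselE. Qed.

Lemma Ez_pos (x : 'cV[R]_n) t j : j \in G t -> (pos t j \in Ez G x) = active G x t.
Proof.
move=> jG; rewrite /Ez; apply/bigcupP/idP.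
- case=> t'; rewrite inE => act kJ.
  by have := J_disj (pos_J HGne jG) kJ => ->.
- by move=> act; exists t; [rewrite inE | exact: pos_J].
Qed.

Definition chat (x : 'cV[R]_n) t j :=
  if (j \in Ex G x) || ~~ active G x t then w t else 0.

Lemma LhatE x : Lhat G w x = Mc (chat x).
Proof.
apply/matrixP => k j.
rewrite /Lhat /PTz /PTxperp /coordproj mul_mx_diag mul_diag_mx LopE !mxE.
rewrite big_distrr big_distrl /= -sumrB; apply: eq_bigr => t _.
case: ifP => [/andP[jG /eqP ->]|_]; last by rewrite mulr0 mul0r subr0.
rewrite Ez_pos // inE /chat.
by case: (active G x t); case: (j \in Ex G x) => /=;
  rewrite ?mulr1 ?mul1r ?mulr0 ?mul0r ?subr0 ?subrr.
Qed.

End Mat.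

Section Ana.
Variables (R : realType) (n N : nat) (G : 'I_N -> {set 'I_n}) (w : 'I_N -> R).
Hypothesis HGne : forall t, G t != set0.
Hypothesis HGcov : \bigcup_(t < N) G t = [set: 'I_n].
Hypothesis Hw : forall t, 0 < w t.
Local Notation pos := (pos HGne).

Definition Ssum (x : 'cV[R]_n) t := \sum_(i in G t) x i 0 ^+ 2.

Lemma Ssum_ge0 x t : 0 <= Ssum x t.
Proof. by apply: sumr_ge0 => i _; exact: sqr_ge0. Qed.

Lemma gnormE x t : Defs.gnorm G x t = Num.sqrt (Ssum x t).
Proof. by []. Qed.

Lemma inactive_zero (x : 'cV[R]_n) t j : ~~ active G x t -> j \in G t -> x j 0 = 0.
Proof.
move=> na jG; apply/eqP; apply: contraNT na => nz.
by apply/existsP; exists j; rewrite jG nz.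
Qed.

Lemma Ssum_gt0 (x : 'cV[R]_n) t : active G x t -> 0 < Ssum x t.
Proof.
case/existsP => i /andP[iG nz].
rewrite /Ssum (bigD1 i) //=.
have h1 : 0 < x i 0 ^+ 2 by rewrite lt_def sqrf_eq0 nz sqr_ge0.
have h2 : 0 <= \sum_(i0 in G t | i0 != i) x i0 0 ^+ 2.
  by apply: sumr_ge0 => k _; exact: sqr_ge0.
exact: ltr_wpDr h2 h1.
Qed.

Lemma gnorm_gt0 (x : 'cV[R]_n) t : active G x t -> 0 < Defs.gnorm G x t.
Proof. by move=> a; rewrite gnormE sqrtr_gt0 Ssum_gt0. Qed.

Lemma Ex_active (x : 'cV[R]_n) t j : j \in Ex G x -> j \in G t -> active G x t.
Proof.
rewrite /Ex inE => nb jG; case act: (active G x t) => //; exfalso.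
move/negP: nb; apply; apply/bigcupP; exists t => //; by rewrite inE act.
Qed.

Lemma notEx (x : 'cV[R]_n) j : j \notin Ex G x ->
  exists2 t, j \in G t & ~~ active G x t.
Proof.
rewrite /Ex inE negbK => /bigcupP[t nt jG]; exists t => //.
by rewrite inE in nt.
Qed.

Lemma Lhat_unit (x : 'cV[R]_n) : (Lhat G w x)^T *m Lhat G w x \in unitmx.
Proof.
rewrite LhatE MtM unitmxE det_diag unitfE; apply/prodf_neq0 => j _; rewrite mxE.
have [t0 jG c0] : exists2 t0, j \in G t0 & chat G w x t0 j = w t0.
  case Ej: (j \in Ex G x).
  - have : j \in \bigcup_(t < N) G t by rewrite HGcov inE.
    by case/bigcupP => t0 _ jG; exists t0 => //; rewrite /chat Ej.
  - case: (notEx (negbT Ej)) => t0 jG na; exists t0 => //.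
    by rewrite /chat na orbT.
rewrite (bigD1 t0) //= c0.
have h1 : 0 < w t0 ^+ 2 by apply: exprn_gt0.
have h2 : 0 <= \sum_(i | (j \in G i) && (i != t0)) chat G w x i j ^+ 2.
  by apply: sumr_ge0 => k _; exact: sqr_ge0.
by rewrite gt_eqF // ltr_wpDr.
Qed.

Lemma Lhat_T_umin (x b : 'cV[R]_n) : (Lhat G w x)^T *m umin G w x b = b.
Proof. by rewrite /umin !mulmxA mulmxV ?mul1mx // Lhat_unit. Qed.

Lemma ud_pos (x b : 'cV[R]_n) t j : j \in G t ->
  udagger G w x b (pos t j) 0 =
  if active G x t then x j 0 / Defs.gnorm G x t else umin G w x b (pos t j) 0.
Proof.
move=> jG; rewrite mxE (big_pred1 t); last first.
  move=> t'; apply/idP/eqP => [h|->]; last exact: pos_J.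
  by apply: (J_disj h); exact: pos_J.
rewrite (big_pred1 j) // => j'; rewrite gselE.
apply/andP/eqP => [[jG' /eqP e]|->]; last by rewrite jG.
by case: (pos_eq jG jG' e).
Qed.

Lemma norm12_Lop (x : 'cV[R]_n) :
  norm12 (Lop G w *m x) = \sum_(t < N) w t * Defs.gnorm G x t.
Proof.
rewrite /norm12; apply: eq_bigr => t _.
rewrite /blknorm (sum_J HGne).
under eq_bigr => j jG do rewrite LopE (mulM HGne) // exprMn.
rewrite -big_distrr /= sqrtrM ?sqrtr_sqr ?ger0_norm ?sqr_ge0 //.
exact: ltW.
Qed.

End Ana.

Section Stat.
Variables (R : realType) (n N : nat) (G : 'I_N -> {set 'I_n}) (w : 'I_N -> R).
Hypothesis HGne : forall t, G t != set0.
Hypothesis Hw : forall t, 0 < w t.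
Local Notation pos := (pos HGne).

Lemma delta_entry (h : R) (x : 'cV[R]_n) j i :
  (x + h *: delta_mx j 0) i 0 = x i 0 + h * (i == j)%:R.
Proof. by rewrite !mxE eqxx andbT. Qed.

Lemma Ssum_pert (x : 'cV[R]_n) h t j : j \in G t ->
  Ssum G (x + h *: delta_mx j 0) t = Ssum G x t + (2 * h * x j 0 + h ^+ 2).
Proof.
move=> jG; rewrite /Ssum (bigD1 j) //= [in RHS](bigD1 j) //= delta_entry eqxx mulr1.
rewrite (eq_bigr (fun i => x i 0 ^+ 2)) => [|i /andP[_ nij]]; last first.
  by rewrite delta_entry (negbTE nij) mulr0 addr0.
ring.
Qed.

Lemma Ssum_pert_out (x : 'cV[R]_n) h t j : j \notin G t ->
  Ssum G (x + h *: delta_mx j 0) t = Ssum G x t.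
Proof.
move=> njG; apply: eq_bigr => i iG; rewrite delta_entry.
have -> : (i == j) = false by apply/negbTE; apply: contraNneq njG => <-.
by rewrite mulr0 addr0.
Qed.

Lemma colA m (A : 'M[R]_(m, n)) j i : (A *m delta_mx j (0 : 'I_1)) i 0 = A i j.
Proof.
rewrite mxE (bigD1 j) //= !mxE eqxx /= mulr1 big1 ?addr0 // => l nl.
by rewrite !mxE (negbTE nl) mulr0.
Qed.

Lemma sqnorm_add m (r a : 'cV[R]_m) h :
  sqnorm (r + h *: a) = sqnorm r + 2 * h * (\sum_i r i 0 * a i 0) + h ^+ 2 * sqnorm a.
Proof.
rewrite /sqnorm; under eq_bigr => i _ do rewrite !mxE.
rewrite !mulr_sumr -!big_split /=; apply: eq_bigr => i _; ring.
Qed.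

Lemma ar_eq m (A : 'M[R]_(m, n)) (r : 'cV[R]_m) j :
  (A^T *m r) j 0 = \sum_i r i 0 * (A *m delta_mx j (0 : 'I_1)) i 0.
Proof. by rewrite mxE; apply: eq_bigr => i _; rewrite mxE colA mulrC. Qed.

Lemma sqrt_bound (S T : R) : 0 < S -> 0 <= T ->
  Num.sqrt T - Num.sqrt S <= (T - S) / (2 * Num.sqrt S).
Proof.
move=> S0 T0.
have r0 : 0 < Num.sqrt S by rewrite sqrtr_gt0.
have eT := sqr_sqrtr T0; have eS := sqr_sqrtr (ltW S0).
move: r0 eT eS; set q := Num.sqrt T; set r := Num.sqrt S => r0 eT eS.
rewrite -eT -eS -subr_ge0.
have -> : (q ^+ 2 - r ^+ 2) / (2 * r) - (q - r) = (q - r) ^+ 2 / (2 * r).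
  by field; rewrite lt0r_neq0.
by apply: divr_ge0; [exact: sqr_ge0 | lra].
Qed.

Lemma quad0 (D K : R) : (forall h, 0 <= h * D + h ^+ 2 * K) -> 0 <= K -> D = 0.
Proof.
move=> H K0; have e0 : 0 < K + 1 by lra.
have := H (- D / (K + 1)).
have -> : (- D / (K + 1)) * D + (- D / (K + 1)) ^+ 2 * K = - (D / (K + 1)) ^+ 2.
  by field; rewrite lt0r_neq0.
rewrite oppr_ge0 => h.
have /eqP : (D / (K + 1)) ^+ 2 = 0 by apply/eqP; rewrite eq_le h sqr_ge0.
rewrite sqrf_eq0 mulf_eq0 invr_eq0 (gt_eqF e0) orbF => /eqP //.
Qed.

End Stat.

Section Stat2.
Variables (R : realType) (n N : nat) (G : 'I_N -> {set 'I_n}) (w : 'I_N -> R).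
Hypothesis HGne : forall t, G t != set0.
Hypothesis Hw : forall t, 0 < w t.
Variables (m : nat) (A : 'M[R]_(m, n)) (y : 'cV[R]_m) (lam : R).
Hypothesis Hlam : 0 < lam.
Variable xs : 'cV[R]_n.
Hypothesis Hmin : forall x : 'cV[R]_n,
      (2 * lam)^-1 * sqnorm (A *m xs - y) + norm12 (Lop G w *m xs)
      <= (2 * lam)^-1 * sqnorm (A *m x - y) + norm12 (Lop G w *m x).

Lemma stationarity j : (forall t, j \in G t -> active G xs t) ->
  \sum_(t < N | j \in G t) w t * (xs j 0 / Defs.gnorm G xs t)
  = (- (lam^-1 *: (A^T *m (A *m xs - y)))) j 0.
Proof.
move=> Hact.
have K0 : 0 <= (2 * lam)^-1 * sqnorm (A *m delta_mx j (0 : 'I_1))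
    + \sum_(t < N | j \in G t) w t / (2 * Defs.gnorm G xs t).
  apply: addr_ge0.
    apply: mulr_ge0; first by rewrite invr_ge0 mulr_ge0 // ltW.
    by apply: sumr_ge0 => i _; exact: sqr_ge0.
  apply: sumr_ge0 => t jG; apply: divr_ge0; first exact: ltW.
  by apply: mulr_ge0 => //; exact: sqrtr_ge0.
have HD := quad0 _ K0.
have {}HD : (A^T *m (A *m xs - y)) j 0 / lam
   + \sum_(t < N | j \in G t) w t * (xs j 0 / Defs.gnorm G xs t) = 0.
  apply: HD => h.
  have H1 := Hmin (xs + h *: delta_mx j 0).
  rewrite !(norm12_Lop HGne Hw) in H1.
  rewrite (mulmxDr A) in H1.
  rewrite -(scalemxAr h A) in H1.
  rewrite addrAC in H1.
  rewrite sqnorm_add -ar_eq in H1.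
  have Hb : \sum_(t < N) w t * Defs.gnorm G (xs + h *: delta_mx j 0) t <=
     \sum_(t < N) w t * Defs.gnorm G xs t +
     (h * \sum_(t < N | j \in G t) w t * (xs j 0 / Defs.gnorm G xs t)
      + h ^+ 2 * \sum_(t < N | j \in G t) w t / (2 * Defs.gnorm G xs t)).
    have -> : h * \sum_(t < N | j \in G t) w t * (xs j 0 / Defs.gnorm G xs t)
      + h ^+ 2 * \sum_(t < N | j \in G t) w t / (2 * Defs.gnorm G xs t) =
      \sum_(t < N) (if j \in G t then
          w t * ((2 * h * xs j 0 + h ^+ 2) / (2 * Defs.gnorm G xs t)) else 0).
      rewrite -big_mkcond !mulr_sumr -big_split; apply: eq_bigr => t jG /=.
      have gn : Defs.gnorm G xs t != 0 by rewrite lt0r_neq0 // gnorm_gt0 // Hact.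
      by field.
    rewrite -big_split /=; apply: ler_sum => t _; case: ifP => jG.
    - rewrite !gnormE Ssum_pert //.
      have S0 := Ssum_gt0 (Hact t jG).
      have T0 : 0 <= Ssum G xs t + (2 * h * xs j 0 + h ^+ 2).
        by rewrite -(Ssum_pert _ _ jG); exact: Ssum_ge0.
      have hb := sqrt_bound S0 T0.
      have e : Ssum G xs t + (2 * h * xs j 0 + h ^+ 2) - Ssum G xs t
         = 2 * h * xs j 0 + h ^+ 2 by ring.
      rewrite e in hb.
      rewrite -mulrDr; apply: (ler_wpM2l (ltW (Hw t))); lra.
    - by rewrite !gnormE Ssum_pert_out ?jG // addr0.
  have e1 : (2 * lam)^-1 * (sqnorm (A *m xs - y)
       + 2 * h * (A^T *m (A *m xs - y)) j 0
       + h ^+ 2 * sqnorm (A *m delta_mx j (0 : 'I_1)))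
     = (2 * lam)^-1 * sqnorm (A *m xs - y)
       + h * ((A^T *m (A *m xs - y)) j 0 / lam)
       + h ^+ 2 * ((2 * lam)^-1 * sqnorm (A *m delta_mx j (0 : 'I_1))).
    by field; rewrite lt0r_neq0.
  rewrite e1 in H1.
  rewrite !mulrDr; lra.
have eb : forall M : 'cV[R]_n, (- (lam^-1 *: M)) j 0 = - (M j 0 / lam).
  by move=> M; rewrite !mxE mulrC.
by rewrite eb; apply/eqP; rewrite -subr_eq0 opprK addrC HD.
Qed.

End Stat2.

Theorem proposition3p6 (R : realType) (n N m : nat)
  (G : 'I_N -> {set 'I_n}) (w : 'I_N -> R)
  (HGne : forall t, G t != set0)
  (HGcov : \bigcup_(t < N) G t = [set: 'I_n])
  (Hw : forall t, 0 < w t)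
  (A : 'M[R]_(m, n)) (y : 'cV[R]_m) (lam : R) (Hlam : 0 < lam)
  (xs : 'cV[R]_n)
  (Hmin : forall x : 'cV[R]_n,
      (2 * lam)^-1 * sqnorm (A *m xs - y) + norm12 (Lop G w *m xs)
      <= (2 * lam)^-1 * sqnorm (A *m x - y) + norm12 (Lop G w *m x)) :
  let beta := - (lam^-1 *: (A^T *m (A *m xs - y))) in
  let ud := udagger G w xs beta in
  (Lop G w)^T *m ud = beta /\
  (forall t : 'I_N, blknorm ud t < 1 -> forall j, j \in G t -> xs j 0 = 0).
Proof.
move=> beta ud; split.
- apply/matrixP => j i; rewrite (ord1 i) {i}.
  rewrite (LopE w HGne) (MT_mul HGne).
  under eq_bigr => t jG do rewrite /ud (ud_pos w HGne xs beta jG).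
  case Ej: (j \in Ex G xs).
  + under eq_bigr => t jG do rewrite (Ex_active Ej jG).
    exact: (stationarity HGne Hw Hlam Hmin (fun t jG => Ex_active Ej jG)).
  + case: (notEx (negbT Ej)) => t0 jG0 na0.
    have xj0 := inactive_zero na0 jG0.
    have := congr1 (fun M : 'cV[R]_n => M j 0) (Lhat_T_umin HGne HGcov Hw xs beta).
    rewrite /= (LhatE w HGne) (MT_mul HGne) => <-.
    apply: eq_bigr => t jG; rewrite /chat Ej /=.
    by case: (active G xs t) => /=; rewrite ?xj0 ?mul0r ?mulr0.
- move=> t hlt j jG.
  case act: (active G xs t); last exact: (inactive_zero (negbT act) jG).
  exfalso; move: hlt; rewrite /blknorm (sum_J HGne).
  under eq_bigr => k kG do rewrite /ud (ud_pos w HGne xs beta kG) act expr_div_n.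
  rewrite gnormE sqr_sqrtr ?Ssum_ge0 // -mulr_suml -/(Ssum G xs t).
  rewrite divff ?sqrtr1 ?ltxx //.
  by rewrite lt0r_neq0 // Ssum_gt0.
Qed.
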